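(* Let $n\ge2$ and $\mathcal G_n$, $\mathcal N_{0,n}$, $z_g$, $U_m(z_g)$ as in the context. Let $f\in A_{\mathbb C}(\mathcal G_n)$ and suppose there is $m\in\mathbb N$ such that $$f=\sum_{g\in\mathcal N_{0,n}}c_g1_{U_m(z_g)},\qquad c_g\in\mathbb C.$$ If $f(z_e)\neq0$, then $|f(z)|>|f(z_e)|/2^n$ for all $z$ in a set with nonempty interior; in particular $f\notin S_{\mathbb C}(\mathcal G_n)$.
   Context: Let $X=\{\mathbf 0,\mathbf 1\}$, $X^*$ the finite words (with empty word $\varnothing$), $X^\omega$ the infinite words, $C(\eta)=\{\eta w:w\in X^\omega\}$, $\mathbf 1^m$ and $\mathbf 1^\infty$ the finite/infinite words of ones. Fix $n\ge2$, a primitive polynomial $f_n$ of degree $n$ over $\mathbb F_2$ with root $\alpha$, and $\operatorname{Tr}(\beta)=\beta+\beta^2+\dots+\beta^{2^{n-1}}\in\mathbb F_2$. $\mathfrak G_n$ is the group of automorphisms of the binary rooted tree $X^*$ generated by $a$ ($a\cdot(\mathbf 0w)=\mathbf 1w$, $a\cdot(\mathbf 1w)=\mathbf 0w$) and $\iota_n(\beta)$, $\beta\in\mathbb F_{2^n}$, where $\iota_n(\beta)\cdot(\mathbf 0w)=\mathbf 0(a^{\operatorname{Tr}(\beta)}\cdot w)$, $\iota_n(\beta)\cdot(\mathbf 1w)=\mathbf 1(\iota_n(\alpha\beta)\cdot w)$; restrictions $g|_x$ are given by $g\cdot(xw)=(g\cdot x)(g|_x\cdot w)$. $\mathcal N_{0,n}=\iota_n(\mathbb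 F_{2^n})$, $e=\iota_n(0)$. $\mathcal G_n$ is the groupoid of germs of the action of the inverse semigroup $\{(\eta,g,\mu)\}\cup\{0\}$ on $X^\omega$ with $(\eta,g,\mu):C(\mu)\to C(\eta)$, $\mu w\mapsto\eta(g\cdot w)$; germs $[(\eta,g,\mu),w]$, $w\in C(\mu)$, with $[(\eta,g,\mu),w]=[(\eta',g',\mu'),w']$ iff $w=w'$ and some finite prefix $\nu=\mu\epsilon=\mu'\epsilon'$ of $w$ satisfies $\eta(g\cdot\epsilon)=\eta'(g'\cdot\epsilon')$ and $g|_\epsilon=g'|_{\epsilon'}$. $\Theta(s,U)=\{[s,w]:w\in U\}$ for $s=(\eta,g,\mu)$, $U\subseteq C(\mu)$ open; these form a basis of the topology. $z_g=[(\varnothing,g,\varnothing),\mathbf 1^\infty]$ and $U_m(z_g)=\Theta((\varnothing,g,\varnothing),C(\mathbf 1^m))$. $A_{\mathbb C}(\mathcal G_n)$ is the complex Steinberg algebra (span of characteristic functions of compact open bisections), and $S_{\mathbb C}(\mathcal G_n)$ its ideal of singular functions, i.e. those $f$ whose support $\{x:f(x)\neq0\}$ has empty interior. *)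

(* Defs.v *)
From HB Require Import structures.
From mathcomp Require Import all_boot all_order all_algebra all_field.
From Stdlib Require Import ClassicalEpsilon.
Set Implicit Arguments. Unset Strict Implicit. Unset Printing Implicit Defensive.
Import Order.TTheory GRing.Theory Num.Theory.
Local Open Scope ring_scope.

Definition primitive_poly_F2 (n : nat) (f : {poly 'F_2}) : Prop :=
  [/\ f \is monic, size f = n.+1, irreducible_poly f,
      f %| 'X^(2 ^ n - 1) - 1
    & forall k : nat, (0 < k < 2 ^ n - 1)%N -> ~~ (f %| 'X^k - 1)].

Definition F2toF (F : finFieldType) (c : 'F_2) : F := (val c)%:R.

Definition trace (n : nat) (F : finFieldType) (b : F) : F :=
  \sum_(i < n) b ^+ (2 ^ i).

(* X = {0,1} is encoded by bool, 0 = false, 1 = true; finite words are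
   seq bool, infinite words are nat -> bool. *)

Definition act_a (w : seq bool) : seq bool :=
  match w with [::] => [::] | x :: w' => (~~ x) :: w' end.

Fixpoint iota_act (n : nat) (F : finFieldType) (alpha : F) (b : F)
    (w : seq bool) : seq bool :=
  match w with
  | [::] => [::]
  | false :: w' => false :: (if trace n b == 1 then act_a w' else w')
  | true :: w' => true :: iota_act n alpha (alpha * b) w'
  end.

Inductive inG (n : nat) (F : finFieldType) (alpha : F) :
    (seq bool -> seq bool) -> Prop :=
  | inG_a : inG n alpha act_a
  | inG_iota (b : F) : inG n alpha (iota_act n alpha b)
  | inG_comp g h : inG n alpha g -> inG n alpha h -> inG n alpha (g \o h)
  | inG_inv g h : inG n alpha g -> cancel g h -> cancel h g -> inG n alpha h.

(* restriction g|_x : g (x v) = (g x) (g|_x v) *)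
Definition restr (g : seq bool -> seq bool) (x : seq bool) (v : seq bool) :=
  drop (size x) (g (x ++ v)).

Definition prefix_of (mu : seq bool) (w : nat -> bool) : Prop :=
  forall i, (i < size mu)%N -> w i = nth false mu i.

(* a representative (eta, g, mu, w) of the germ [(eta,g,mu), w] *)
Record rep := Rep { r_eta : seq bool; r_g : seq bool -> seq bool;
                    r_mu : seq bool; r_w : nat -> bool }.

Definition valid (n : nat) (F : finFieldType) (alpha : F) (r : rep) : Prop :=
  inG n alpha (r_g r) /\ prefix_of (r_mu r) (r_w r).

(* [(eta,g,mu),w] = [(eta',g',mu'),w'] iff w = w' and some finite prefix
   nu = mu eps = mu' eps' of w has eta(g.eps) = eta'(g'.eps') and
   g|_eps = g'|_eps'. *)
Definition germ_eq (r r' : rep) : Prop :=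
  (forall i, r_w r i = r_w r' i) /\
  exists k : nat,
    [/\ (size (r_mu r) <= k)%N, (size (r_mu r') <= k)%N &
     let nu := mkseq (r_w r) k in
     let e := drop (size (r_mu r)) nu in
     let e' := drop (size (r_mu r')) nu in
     r_eta r ++ r_g r e = r_eta r' ++ r_g r' e' /\
     forall v, restr (r_g r) e v = restr (r_g r') e' v].

Definition open_cantor (U : (nat -> bool) -> Prop) : Prop :=
  forall w, U w -> exists k : nat, forall w',
    (forall i, (i < k)%N -> w' i = w i) -> U w'.

Definition Theta (eta : seq bool) (g : seq bool -> seq bool) (mu : seq bool)
    (U : (nat -> bool) -> Prop) (r : rep) : Prop :=
  exists w, U w /\ germ_eq r (Rep eta g mu w).

Definition basic_ok (n : nat) (F : finFieldType) (alpha : F)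
    (eta : seq bool) (g : seq bool -> seq bool) (mu : seq bool)
    (U : (nat -> bool) -> Prop) : Prop :=
  inG n alpha g /\ open_cantor U /\ (forall w, U w -> prefix_of mu w).

Definition openG (n : nat) (F : finFieldType) (alpha : F) (B : rep -> Prop)
  : Prop :=
  forall r, B r -> valid n alpha r /\
    exists eta g mu U, [/\ basic_ok n alpha eta g mu U, Theta eta g mu U r &
      forall r', valid n alpha r' -> Theta eta g mu U r' -> B r'].

Definition nonempty_interior (n : nat) (F : finFieldType) (alpha : F)
    (A : rep -> Prop) : Prop :=
  exists B, [/\ openG n alpha B, exists r, B r & forall r, B r -> A r].

Definition supp (n : nat) (F : finFieldType) (alpha : F)
    (C : numClosedFieldType) (f : rep -> C) : rep -> Prop :=
  fun r => valid n alpha r /\ f r != 0.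

Definition singular (n : nat) (F : finFieldType) (alpha : F)
    (C : numClosedFieldType) (f : rep -> C) : Prop :=
  ~ nonempty_interior n alpha (supp n alpha f).

Definition z_ (g : seq bool -> seq bool) : rep := Rep [::] g [::] (fun _ => true).

Definition U_m (n : nat) (F : finFieldType) (alpha : F) (m : nat)
    (g : seq bool -> seq bool) (r : rep) : Prop :=
  valid n alpha r /\ Theta [::] g [::] (prefix_of (nseq m true)) r.

Definition indic (C : numClosedFieldType) (P : Prop) : C :=
  if excluded_middle_informative P then 1 else 0.

(* Main.v *)
Require Import Defs.
From HB Require Import structures.
From Stdlib Require Import ClassicalEpsilon.
From mathcomp Require Import all_boot all_order all_algebra all_field zify.
Import Order.TTheory GRing.Theory Num.Theory.
Local Open Scope ring_scope.

Section Alg.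
Variables (n : nat) (F : finFieldType).
Hypothesis n_gt0 : (0 < n)%N.
Hypothesis cardF : #|F| = (2 ^ n)%N.

Lemma char2 : 2 \in [pchar F].
Proof. exact: (card_finPcharP cardF). Qed.

Lemma sqrD (x y : F) : (x + y) ^+ 2 = x ^+ 2 + y ^+ 2.
Proof. exact: (rmorphD (pFrobenius_aut char2)). Qed.

Lemma frobD i (x y : F) : (x + y) ^+ (2 ^ i) = x ^+ (2 ^ i) + y ^+ (2 ^ i).
Proof.
elim: i => [|i IH]; first by rewrite !expr1.
by rewrite expnSr !exprM IH sqrD.
Qed.

Lemma traceD (x y : F) : trace n (x + y) = trace n x + trace n y.
Proof. by rewrite /trace -big_split; apply: eq_bigr => i _; rewrite frobD. Qed.

Lemma trace0 : trace n (0 : F) = 0.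
Proof. by rewrite /trace big1 // => i _; rewrite expr0n expn_eq0. Qed.

Lemma trace_sq (x : F) : trace n x ^+ 2 = trace n x.
Proof.
have -> : trace n x ^+ 2 = \sum_(i < n) x ^+ (2 ^ i.+1).
  rewrite /trace -(pFrobenius_autE char2) rmorph_sum.
  by apply: eq_bigr => i _; rewrite expnSr exprM.
apply: (addrI x).
have e1 : \sum_(i < n.+1) x ^+ (2^i) = x + \sum_(i<n) x^+(2^i.+1).
  by rewrite big_ord_recl expn0 expr1.
have e2 : \sum_(i < n.+1) x ^+ (2^i) = trace n x + x ^+ (2^n).
  by rewrite big_ord_recr.
by rewrite -e1 e2 -cardF expf_card addrC.
Qed.

Lemma trace01 (x : F) : trace n x = 0 \/ trace n x = 1.
Proof.
have := trace_sq x; rewrite expr2 => h.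
have : trace n x * (trace n x - 1) = 0 by rewrite mulrBr mulr1 h subrr.
by move/eqP; rewrite mulf_eq0 subr_eq0 => /orP[/eqP|/eqP]; [left|right].
Qed.

Lemma size_trpoly k : size (\sum_(i < k.+1) 'X^(2 ^ i) : {poly F}) = (2 ^ k).+1.
Proof.
elim: k => [|k IH]; first by rewrite big_ord1 expn0 size_polyXn.
by rewrite big_ord_recr /= addrC size_polyDl size_polyXn // IH ltnS ltn_exp2l.
Qed.

Lemma trace_ex1 : exists x0 : F, trace n x0 = 1.
Proof.
case: (pickP [pred x : F | trace n x == 1]) => [x /eqP|H]; first by exists x.
have H0 : forall x : F, trace n x = 0.
  by move=> x; case: (trace01 x) => // /eqP; have := H x; rewrite /= => ->.
case: n n_gt0 cardF H0 => // k _ cF H0.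
pose p : {poly F} := \sum_(i < k.+1) 'X^(2 ^ i).
have sp := size_trpoly k.
have : (size (enum F) < size p)%N.
  apply: max_poly_roots; last exact: enum_uniq.
    by rewrite -size_poly_eq0 sp.
  apply/allP => x _; rewrite /root /p horner_sum.
  apply/eqP; rewrite -[RHS](H0 x) /trace; apply: eq_bigr => i _.
  by rewrite hornerXn.
by rewrite -cardE cF /p sp ltnS leqNgt ltn_exp2l // ltnSn.
Qed.

Definition sgnt (C : numClosedFieldType) (x : F) : C :=
  if trace n x == 1 then -1 else 1.

Lemma orth (C : numClosedFieldType) (b : F) :
  b != 0 -> \sum_(g : F) sgnt C (g * b) = 0.
Proof.
move=> nzb.
set S := \sum_(g : F) sgnt C g.
have e1 : \sum_(g : F) sgnt C (g * b) = S.
  by rewrite /S [RHS](reindex_inj (mulIf nzb)).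
have [x0 hx0] := trace_ex1.
have e2 : S = \sum_(g : F) sgnt C (g + x0).
  by rewrite /S [LHS](reindex_inj (addIr x0)).
have e3 : forall g, sgnt C (g + x0) = - sgnt C g.
  move=> g; rewrite /sgnt traceD hx0.
  have h01 : ((0 : F) == 1) = false by rewrite eq_sym oner_eq0.
  case: (trace01 g) => ->.
    by rewrite add0r eqxx h01.
  by rewrite (addrr_pchar2 char2) eqxx h01 opprK.
have e4 : S = - S by rewrite {1}e2 -sumrN; apply: eq_bigr => g _; rewrite e3.
rewrite e1; apply/eqP.
have : S *+ 2 == 0 by rewrite mulr2n {1}e4 addNr.
by rewrite mulrn_eq0.
Qed.

Definition phi (c : 'F_2) : F := F2toF F c.
Lemma phi_sub : {morph phi : x y / x - y}.
Proof.
have h2 : (2%:R : F) = 0 by apply/eqP; case/andP: char2.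
have h1 : (-1 : F) = 1.
  by apply/eqP; rewrite -subr_eq0 -opprD -[1+1]/(2%:R) h2 oppr0.
by case=> [[|[|]]] // ? [[|[|]]] //= ?; rewrite /phi /F2toF /= ?subr0 ?sub0r ?subrr ?h1.
Qed.
Lemma phi_mul : {morph phi : x y / x * y}.
Proof. by case=> [[|[|]]] // ? [[|[|]]] //= ?; rewrite /phi /F2toF /= ?mulr0 ?mul0r ?mulr1. Qed.
HB.instance Definition _ := GRing.isZmodMorphism.Build _ _ phi phi_sub.
HB.instance Definition _ := GRing.isMonoidMorphism.Build _ _ phi (conj (erefl _) phi_mul).

Variables (fn : {poly 'F_2}) (alpha : F).
Hypothesis prim : primitive_poly_F2 n fn.
Hypothesis root_alpha : root (map_poly (@F2toF F) fn) alpha.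

Let N := (2 ^ n - 1)%N.

Lemma map_Xn1 k : map_poly phi ('X^k - 1) = 'X^k - 1.
Proof. by rewrite rmorphB /= map_polyXn rmorph1. Qed.

Lemma alphaN : alpha ^+ N = 1.
Proof.
have r : root (map_poly phi fn) alpha by [].
case: prim => _ _ _ dv _.
have dv' : map_poly phi fn %| map_poly phi ('X^N - 1) by rewrite dvdp_map.
have := root_dvdp dv' r.
by rewrite map_Xn1 /root !hornerE subr_eq0 => /eqP.
Qed.

Lemma notdvd k : (0 < k < N)%N -> alpha ^+ k != 1.
Proof.
move=> hk; apply/negP => /eqP ak.
case: prim => _ _ irr _ nd.
have cp : coprimep fn ('X^k - 1) by rewrite irreducible_poly_coprime // nd.
have r : root (map_poly phi fn) alpha by [].
rewrite -(coprimep_map phi) in cp.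
have := coprimep_root cp r.
by rewrite map_Xn1 !hornerE ak subrr eqxx.
Qed.

Lemma N_gt0 : (0 < N)%N.
Proof. by rewrite /N subn_gt0 -{1}(expn0 2) ltn_exp2l. Qed.

Lemma alpha_prim : N.-primitive_root alpha.
Proof.
apply/andP; split; first exact: N_gt0.
apply/forallP => i; rewrite unity_rootE.
case: (i.+1 =P N) => [->|ne]; first by rewrite alphaN !eqxx.
rewrite eqbF_neg; apply: notdvd.
by rewrite /= ltn_neqAle ltn_ord andbT; apply/eqP.
Qed.

Lemma gen (g : F) : g != 0 -> forall K, exists j, g = alpha ^+ (K + j).
Proof.
move=> nzg K.
have gN : g ^+ N = 1.
  apply: (mulIf nzg); rewrite mul1r -exprSr /N subn1 prednK ?expn_gt0 //.
  by rewrite -cardF expf_card.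
have [i ->] := prim_rootP alpha_prim gN.
exists (i + K * N.-1)%N.
have -> : (K + (i + K * N.-1) = i + N * K)%N.
  by rewrite addnCA -mulnS prednK ?N_gt0 // mulnC.
by rewrite exprD exprM alphaN expr1n mulr1.
Qed.

End Alg.
Definition IsAuto (g : seq bool -> seq bool) :=
  (forall u, size (g u) = size u) /\
  (forall u v, take (size u) (g (u ++ v)) = g u).

Lemma auto_a : IsAuto act_a.
Proof.
split; first by case.
case=> [|x u] v /=; [by rewrite take0 | by rewrite take_size_cat].
Qed.

Lemma auto_comp g h : IsAuto g -> IsAuto h -> IsAuto (g \o h).
Proof.
move=> [sg tg] [sh th]; split=> [u|u v] /=; first by rewrite sg sh.
rewrite -{1}(cat_take_drop (size u) (h (u ++ v))) th -(sh u) tg.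
by [].
Qed.

Lemma auto_inv g h : IsAuto g -> cancel g h -> cancel h g -> IsAuto h.
Proof.
move=> [sg tg] gh hg.
have sh : forall u, size (h u) = size u.
  by move=> u; rewrite -{2}(hg u) sg.
split=> // u v.
set z := h (u ++ v).
have e : g z = u ++ v by rewrite /z hg.
have su : size (take (size u) z) = size u.
  by rewrite size_takel // /z sh size_cat leq_addr.
have e2 : g (take (size u) z) = u.
  have := tg (take (size u) z) (drop (size u) z).
  by rewrite cat_take_drop e su take_size_cat.
by have := congr1 h e2; rewrite gh => <-.
Qed.

Definition gc (w : nat -> bool) (r r' : rep) (k : nat) : Prop :=
  [/\ (size (r_mu r) <= k)%N, (size (r_mu r') <= k)%N &
     let nu := mkseq w k in
     let e := drop (size (r_mu r)) nu in
     let e' := drop (size (r_mu r')) nu in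
     r_eta r ++ r_g r e = r_eta r' ++ r_g r' e' /\
     forall v, restr (r_g r) e v = restr (r_g r') e' v].

Lemma germ_eqE r r' : germ_eq r r' <-> (r_w r =1 r_w r') /\ exists k, gc (r_w r) r r' k.
Proof. exact: iff_refl. Qed.

Lemma gc_sym w r r' k : gc w r r' k -> gc w r' r k.
Proof. by case=> h1 h2 /= [e1 e2]; split => //; split => [|v]; rewrite ?e1 ?e2. Qed.

Lemma gc_trans w r1 r2 r3 k : gc w r1 r2 k -> gc w r2 r3 k -> gc w r1 r3 k.
Proof.
case=> h1 h2 /= [e1 e2]; case=> h1' h2' /= [e1' e2'].
by split => //; split => [|v]; rewrite ?e1 ?e1' ?e2 ?e2'.
Qed.

Lemma gc_w w w' r r' k : w =1 w' -> gc w r r' k -> gc w' r r' k.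
Proof. by move=> h; rewrite /gc (eq_mkseq h). Qed.

Lemma mkseqD (w : nat -> bool) a b :
  mkseq w (a + b) = mkseq w a ++ mkseq (fun i => w (a + i)) b.
Proof.
rewrite /mkseq iotaD map_cat add0n; congr (_ ++ _).
by rewrite -[a in iota a](addn0 a) iotaDl -map_comp.
Qed.

Lemma auto_split g e x : IsAuto g -> g (e ++ x) = g e ++ restr g e x.
Proof. by case=> _ tg; rewrite /restr -{1}(cat_take_drop (size e) (g (e ++ x))) tg. Qed.

Lemma auto_restr g e x v : restr g (e ++ x) v = drop (size x) (restr g e (x ++ v)).
Proof. by rewrite /restr drop_drop size_cat catA addnC. Qed.

Lemma drop_catl T n0 (s1 s2 : seq T) :
  (n0 <= size s1)%N -> drop n0 (s1 ++ s2) = drop n0 s1 ++ s2.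
Proof.
rewrite drop_cat; case: ltnP => // h1 h2.
have -> : n0 = size s1 by apply/eqP; rewrite eqn_leq h1 h2.
by rewrite subnn drop0 drop_size.
Qed.

Lemma gc_ext w r r' k j : IsAuto (r_g r) -> IsAuto (r_g r') ->
  gc w r r' k -> gc w r r' (k + j).
Proof.
move=> ag ag' [h1 h2 /= [e1 e2]].
split; try by rewrite (leq_trans _ (leq_addr j k)).
rewrite /= mkseqD !drop_catl ?size_mkseq //.
split; first by rewrite (auto_split _ _ _ ag) (auto_split _ _ _ ag') !catA e1 e2.
by move=> v; rewrite !auto_restr e2.
Qed.

Lemma germ_refl r : germ_eq r r.
Proof. by split => //; exists (size (r_mu r)); split. Qed.

Lemma germ_sym r r' : germ_eq r r' -> germ_eq r' r.
Proof.
move=> [hw [k hk]]; split => [i|]; first by rewrite hw.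
by exists k; exact: (@gc_w (r_w r) (r_w r') r' r k hw (@gc_sym (r_w r) r r' k hk)).
Qed.

Lemma germ_trans r1 r2 r3 : germ_eq r1 r2 -> germ_eq r2 r3 ->
  IsAuto (r_g r1) -> IsAuto (r_g r2) -> IsAuto (r_g r3) -> germ_eq r1 r3.
Proof.
move=> [h12 [k1 g1]] [h23 [k2 g2]] a1 a2 a3.
split => [i|]; first by rewrite h12 h23.
exists (k1 + k2).
have G1 := @gc_ext (r_w r1) r1 r2 k1 k2 a1 a2 g1.
have G2 := @gc_ext (r_w r2) r2 r3 k2 k1 a2 a3 g2.
rewrite addnC in G2.
have G2' := @gc_w (r_w r2) (r_w r1) r2 r3 (k1+k2) (fun i => esym (h12 i)) G2.
exact: (@gc_trans (r_w r1) r1 r2 r3 (k1+k2) G1 G2').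
Qed.

Lemma mkseq_prefix s w : prefix_of s w -> mkseq w (size s) = s.
Proof.
move=> H; apply: (@eq_from_nth _ false); rewrite ?size_mkseq // => i hi.
by rewrite nth_mkseq // H.
Qed.

Arguments gc_sym {w r r' k}.
Arguments gc_trans {w r1 r2 r3 k}.
Arguments gc_w {w w' r r' k}.
Arguments gc_ext {w r r' k} j.
Arguments germ_sym {r r'}.
Arguments germ_trans {r1 r2 r3}.
Arguments mkseq_prefix {s w}.

Section Words.
Variables (n : nat) (F : finFieldType) (alpha : F).

Local Notation iota := (iota_act n alpha).

Lemma auto_iota b : IsAuto (iota b).
Proof.
split.
  move=> u; elim: u b => [|[] u IH] b //=; first by rewrite IH.
  by case: (_ == 1) => //; case: u {IH}.
move=> u v; elim: u b => [|[] u IH] b /=; first by rewrite take0.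
  by rewrite IH.
case: (_ == 1); last by rewrite take_size_cat.
by case: u {IH} => [|x u] /=; [rewrite take0 | rewrite take_size_cat].
Qed.

Lemma inG_auto g : inG n alpha g -> IsAuto g.
Proof.
elim=> [|b|g1 g2 _ H1 _ H2|g1 g2 _ H1 c1 c2].
- exact: auto_a.
- exact: auto_iota.
- exact: auto_comp.
- exact: auto_inv c1 c2.
Qed.

Lemma iota_ones b K v :
  iota b (nseq K true ++ v) = nseq K true ++ iota (alpha ^+ K * b) v.
Proof.
elim: K b => [|K IH] b /=; first by rewrite expr0 mul1r.
by rewrite IH exprSr mulrA.
Qed.

Lemma iota_false b v :
  iota b (false :: v) = false :: (if trace n b == 1 then act_a v else v).
Proof. by []. Qed.

Lemma drop_nsf k (X : seq bool) :
  drop (size (nseq k true ++ [:: false])) (nseq k true ++ false :: X) = X.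
Proof. by elim: k => [|k IH] /=; rewrite ?drop0. Qed.

Lemma in_Um m k d w (r : rep) b : (m <= k)%N ->
  prefix_of (nseq k true ++ [:: false]) w -> valid n alpha r ->
  germ_eq r (Rep [::] (iota d) [::] w) ->
  (U_m n alpha m (iota b) r <->
   (trace n (alpha ^+ k * b) == 1) = (trace n (alpha ^+ k * d) == 1)).
Proof.
move=> hmk hw vr hr.
have ar : IsAuto (r_g r) := @inG_auto (r_g r) (proj1 vr).
have ai := auto_iota.
have key : forall c v, iota c (nseq k true ++ false :: v) = nseq k true ++
   false :: (if trace n (alpha ^+ k * c) == 1 then act_a v else v).
  by move=> c v; rewrite iota_ones.
have mw : mkseq w k.+1 = nseq k true ++ [:: false].
  by have := mkseq_prefix hw; rewrite size_cat size_nseq addn1.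
split.
- case=> _ [w' [hw' hg]].
  have g2 : germ_eq (Rep [::] (iota d) [::] w) (Rep [::] (iota b) [::] w').
    exact: (germ_trans (germ_sym hr) hg (ai d) ar (ai b)).
  case: g2 => /= hww [K hK].
  have [_ _ /= [e1 _]] := @gc_ext w (Rep [::] (iota d) [::] w) (Rep [::] (iota b) [::] w') K (k.+2) (ai d) (ai b) hK.
  move: e1; have -> : (K + k.+2 = k.+1 + K.+1)%N by lia.
  rewrite mkseqD mw /= -catA /= drop0 /mkseq /= !key => /(congr1 (drop k)).
  rewrite !drop_size_cat ?size_nseq // => [[]].
  by case: (_ == 1); case: (_ == 1) => //= [[]]; case: (w _).
- move=> hb; split => //; exists w; split.
    move=> i hi; rewrite size_nseq in hi; have := hw i; rewrite nth_cat size_nseq.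
    have hik : (i < k)%N by apply: leq_trans hi hmk.
    rewrite hik nth_nseq hik nth_nseq hi => -> //.
    by rewrite size_cat size_nseq addn1 ltnS ltnW.
  apply: (fun H => @germ_trans r (Rep [::] (iota d) [::] w) (Rep [::] (iota b) [::] w) hr H ar (ai d) (ai b)).
  split => //; exists k.+1; split => //.
  rewrite mw /= drop0; split.
    by rewrite !key; case: (_ == 1); case: (_ == 1).
  by move=> v; rewrite /restr -catA /= !key !drop_nsf hb.
Qed.

Lemma mk_true K : mkseq (fun _ => true) K = nseq K true.
Proof.
apply: (@eq_from_nth _ false); rewrite ?size_mkseq ?size_nseq // => i hi.
by rewrite nth_mkseq // nth_nseq hi.
Qed.

Lemma Um_ze m b
  (Hgen : forall g : F, g != 0 -> forall K, exists j, g = alpha ^+ (K + j))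
  (x0 : F) (hx0 : trace n x0 = 1) (ht0 : trace n (0 : F) = 0) :
  U_m n alpha m (iota b) (z_ (iota 0)) <-> b = 0.
Proof.
have h01 : ((0 : F) == 1) = false by rewrite eq_sym oner_eq0.
split.
- case=> _ [w' [_ hg]]; case: hg => /= hww [K [_ _ /= [_ e2]]].
  case: (eqVneq b 0) => // nzb; exfalso.
  have nx0 : x0 != 0 by apply/eqP => h; move: hx0; rewrite h ht0 => /eqP; rewrite h01.
  have nz : x0 / b != 0 by rewrite mulf_neq0 ?invr_eq0.
  have [j hj] := Hgen _ nz K.
  have := e2 (nseq j true ++ [:: false; false]).
  rewrite /restr mk_true drop0 !iota_ones !drop_size_cat ?size_nseq //=.
  rewrite !mulr0 ht0 h01 mulrA -exprD addnC -hj divfK // hx0 eqxx.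
  by move/(congr1 (drop j)); rewrite !drop_size_cat ?size_nseq.
- move=> ->; split; first by split => //; exact: inG_iota.
  exists (fun _ => true); split; last exact: germ_refl.
  by move=> i; rewrite size_nseq => hi; rewrite nth_nseq hi.
Qed.

End Words.

Lemma indic_iff (C : numClosedFieldType) (P : Prop) (bb : bool) :
  (P <-> bb) -> indic C P = if bb then 1 else 0.
Proof.
move=> h; rewrite /indic; case: excluded_middle_informative => p.
  by have := (proj1 h) p => ->.
by case: bb h => // h; exfalso; apply: p; apply/h.
Qed.

Lemma prefix_open s : open_cantor (prefix_of s).
Proof.
move=> w hw; exists (size s) => w' h i hi.
by rewrite h // hw.
Qed.

Theorem mainTheorem11 (n : nat) (F : finFieldType) (C : numClosedFieldType)
    (fn : {poly 'F_2}) (alpha : F) (m : nat) (c : F -> C) (f : rep -> C) :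
  (2 <= n)%N -> #|F| = (2 ^ n)%N -> primitive_poly_F2 n fn ->
  poly.root (map_poly (@F2toF F) fn) alpha ->
  (forall r, f r = \sum_(b : F) c b * indic C (U_m n alpha m (iota_act n alpha b) r)) ->
  f (z_ (iota_act n alpha 0)) != 0 ->
  (exists A : rep -> Prop, nonempty_interior n alpha A /\
     forall z, A z -> `|f (z_ (iota_act n alpha 0))| / 2%:R ^+ n < `|f z|)
  /\ ~ singular n alpha f.
Proof.
move=> n2 cardF prim ralpha hf hne.
have n0 : (0 < n)%N by apply: ltnW.
have [x0 hx0] := @trace_ex1 n F n0 cardF.
have Hgen := @gen n F n0 cardF fn alpha prim ralpha.
have ht0 := trace0 n F.
have h01 : ((0 : F) == 1) = false by rewrite eq_sym oner_eq0.
have fze : f (z_ (iota_act n alpha 0)) = c 0.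
  rewrite hf (bigD1 0) //= big1 ?addr0.
    rewrite (@indic_iff C _ true) ?mulr1 //; split => // _.
    exact: (proj2 (@Um_ze n F alpha m 0 Hgen x0 hx0 ht0)).
  move=> b nzb; rewrite (@indic_iff C _ false) ?mulr0 //; split => // h.
  have := proj1 (@Um_ze n F alpha m b Hgen x0 hx0 ht0) h.
  by move/eqP; rewrite (negbTE nzb).
set eps := `|f (z_ (iota_act n alpha 0))| / 2%:R ^+ n.
have P0 : (0 : C) < 2%:R ^+ n by rewrite exprn_gt0 // ltr0n.
have eps0 : 0 <= eps by rewrite divr_ge0 // ltW.
pose S g t := \sum_(b : F) c b * (if (trace n (g * b) == 1) == t then 1 else 0).
have [g [nzg [t hgt]]] : exists g : F, g != 0 /\ exists t : bool, eps < `|S g t|.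
  case: (pickP (fun g : F => (g != 0) && ((eps < `|S g true|) || (eps < `|S g false|)))).
    move=> g /andP [nz /orP [h|h]]; exists g; split => //; by [exists true | exists false].
  move=> H; exfalso.
  have bound : forall g, g != 0 -> forall t, `|S g t| <= eps.
    move=> g nz t; have := H g; rewrite /= nz /= => /norP [h1 h2].
    by case: t; rewrite real_leNgt ?normr_real ?ger0_real.
  pose D g := \sum_(b : F) c b * sgnt n F C (g * b).
  have hD : forall g, D g = S g false - S g true.
    move=> g; rewrite /D /S -sumrB; apply: eq_bigr => b _; rewrite /sgnt.
    by case: (_ == 1) => /=; rewrite ?mulr0 ?sub0r ?subr0 ?mulrN1 ?mulr1.
  have hDle : forall g, `|D g| <= eps *+ 2.
    move=> g; case: (eqVneq g 0) => [->|nz]; last first.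
      by rewrite hD mulr2n (le_trans (ler_normB _ _)) // lerD ?bound.
    have -> : D 0 = S 1 false + S 1 true.
      rewrite /D /S -big_split; apply: eq_bigr => b _; rewrite mul0r /sgnt ht0 h01.
      by case: (_ == 1) => /=; rewrite ?mulr0 ?addr0 ?add0r ?mulr1.
    by rewrite mulr2n (le_trans (ler_normD _ _)) // lerD ?bound ?oner_eq0.
  have hsum : \sum_(g : F) D g = c 0 * 2%:R ^+ n.
    rewrite /D exchange_big /= (bigD1 0) //=.
    rewrite [X in _ + X]big1 ?addr0; last first.
      move=> b nzb; rewrite -mulr_sumr.
      by rewrite (@orth n F n0 cardF C b nzb) mulr0.
    rewrite -mulr_sumr; congr (_ * _).
    under eq_bigr => g _ do rewrite mulr0 /sgnt ht0 h01.
    by rewrite sumr_const -natrX -cardF.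
  have : `|c 0| * 2%:R ^+ n <= `|c 0| * 2%:R.
    have -> : `|c 0| * 2%:R ^+ n = `|\sum_(g : F) D g|.
      by rewrite hsum normrM (ger0_norm (ltW P0)).
    apply: (le_trans (ler_norm_sum _ _ _)).
    apply: (le_trans (ler_sum _ (fun g _ => hDle g))).
    have cT : #|(xpredT : pred F)| = (2 ^ n)%N := cardF.
    rewrite sumr_const /eps fze cT -mulrnA mulnC mulrnA.
    have -> : `|c 0| / 2%:R ^+ n *+ 2 ^ n = `|c 0|.
      by rewrite -mulr_natr natrX divfK ?gt_eqF.
    by rewrite mulr_natr.
  rewrite ler_pM2l; last by rewrite normr_gt0 -fze.
  rewrite -natrX ler_nat => h.
  have H4 : (2 ^ 2 <= 2 ^ n)%N by rewrite leq_exp2l.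
  by have := leq_trans H4 h.
have [j hj] := Hgen g nzg m.
set k := (m + j)%N in hj.
have [d hd] : exists d : F, (trace n (g * d) == 1) = t.
  case: t {hgt}.
    by exists (x0 / g); rewrite mulrC divfK // hx0 eqxx.
  by exists 0; rewrite mulr0 ht0 h01.
pose U := prefix_of (nseq k true ++ [:: false]).
pose B := fun r => valid n alpha r /\ Theta [::] (iota_act n alpha d) [::] U r.
have fB : forall r, B r -> f r = S g t.
  move=> r [vr [w [hw hr]]]; rewrite hf /S; apply: eq_bigr => b _; congr (_ * _).
  apply: indic_iff.
  rewrite (@in_Um n F alpha m k d w r b (leq_addr j m) hw vr hr) -hj hd.
  by split => [->|/eqP].
have Bbig : forall r, B r -> eps < `|f r| by move=> r /fB ->.
have openB : openG n alpha B.
  move=> r Br; split; first exact: Br.1.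
  exists [::], (iota_act n alpha d), [::], U; split.
  - split; first exact: inG_iota.
    by split; [exact: prefix_open | move=> w _ i].
  - exact: Br.2.
  - by move=> r' vr' th; split.
have neB : exists r, B r.
  exists (Rep [::] (iota_act n alpha d) [::] (fun i => (i < k)%N)).
  split; first by split; [exact: inG_iota | move=> i].
  exists (fun i => (i < k)%N); split; last exact: germ_refl.
  move=> i; rewrite size_cat size_nseq addn1 ltnS => hi.
  rewrite nth_cat size_nseq; case: ltnP => h; first by rewrite nth_nseq h.
  have -> : i = k by apply/eqP; rewrite eqn_leq hi h.
  by rewrite subnn.
split.
- exists B; split; last exact: Bbig.
  by exists B; split.
- move=> H; apply: H; exists B; split => // r Br; split; first exact: Br.1.
  by rewrite -normr_gt0 (le_lt_trans eps0 (Bbig r Br)).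
Qed.
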